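(* Let $\mathbb K\in\{\mathbb R,\mathbb C\}$ and fix a family of Taylor sheaves $\mathcal F^V$ (one for each finite-dimensional $\mathbb K$-linear space $V$). For all prevarieties $M,N\in\widehat{\mathcal V}$, there exists a $\widehat{\mathcal V}$-product structure on $M\times N$.
   Context: A space with a sheaf of $\mathbb K$-valued functions is a topological space $M$ together with, for each open $U\subset M$, a $\mathbb K$-algebra $\mathcal F(U)$ of functions $U\to\mathbb K$ (containing the constants, with pointwise operations) such that: if $W\subset U$ are open and $f\in\mathcal F(U)$ then $f|_W\in\mathcal F(W)$; and if $U=\bigcup_i U_i$ with $U_i$ open and $f:U\to\mathbb K$ satisfies $f|_{U_i}\in\mathcal F(U_i)$ for all $i$, then $f\in\mathcal F(U)$. The germ of $f$ at $p$ and the stalk $\mathcal F_p$ (a $\mathbb K$-algebra of germs) are defined as usual; $\mathfrak m_p\subset\mathcal F_p$ is the ideal of germs vanishing at $p$. The sheaf is local if every germ in $\mathcal F_p\setminus\mathfrak m_p$ is invertible in $\mathcal F_p$, for all $p$. A continuous map $\psi:(M_1,\mathcal F_1)\to(M_2,\mathcal F_2)$ is smooth if $f\circ\psi\in\mathcal F_1(\psi^{-1}(U))$ for all open $U\subset M_2$ and $f\in\mathcal F_2(U)$. For a subset $S\subset M$, the induced structure on $S$ is the subspace topology together with the sheaf of functions on open subsets of $S$ which are locally restrictions of functions in $\mathcal F$. Taylor sheaves: every finite-dimensional $\mathbb K$-linear space $V$ is equipped with a topology and a local sheaf $\mathcal F^V$ of $\mathbb K$-valued functions such that: (1) the topology on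 $V$ is the weakest one making all functions in $\mathcal F^V(V)$ continuous; (2) $V^*\subset\mathcal F^V(V)$; (3) for finite-dimensional $V,W$ and open $U\subset V$ (with induced structure), a map $\psi:U\to W$ is smooth iff $\varphi\circ\psi\in\mathcal F^V(U)$ for all $\varphi\in W^*$; (4) for each $p\in V$, the composition $V^*\to\mathfrak m_p\to\mathfrak m_p/\mathfrak m_p^2$, $\varphi\mapsto(\varphi-\varphi(p))_p \bmod \mathfrak m_p^2$, is a $\mathbb K$-linear isomorphism (so for $f\in\mathcal F^V(U)$, $p\in U$, there is a unique $\varphi\in V^*$ with $f_p-f(p)-(\varphi-\varphi(p))_p\in\mathfrak m_p^2$; write $df_p:=\varphi$); (5) for open $U\subset V$ and $f\in\mathcal F^V(U)$, the function $d'f:U\times V\to\mathbb K$, $(p,v)\mapsto df_p(v)$, belongs to $\mathcal F^{V\oplus V}(U\times V)$ (here $U\times V$ is open in $V\oplus V$). A prevariety is a space with a sheaf of $\mathbb K$-valued functions $M$ admitting a countable or finite open cover by open sets each of which, with the induced structure, is isomorphic (via a smooth map with smooth inverse) to a locally closed subset of some finite-dimensional $\mathbb K$-linear space $V$ endowed with the structure induced from $(V,\mathcal F^V)$. $\widehat{\mathcal V}$ denotes the class of prevarieties. For $M_1,M_2\in\widehat{\mathcal V}$, a $\widehat{\mathcal V}$-product structure on the set $M_1\times M_2$ is a topology and sheaf making $M_1\times M_2$ a prevariety such that the projections $\pi_i:M_1\times M_2\to M_i$ are smooth and, for every $M\in\widehat{\mathcal V}$ and smooth maps $\psi_i:M\to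 M_i$ ($i=1,2$), the map $\psi=(\psi_1,\psi_2):M\to M_1\times M_2$ is smooth. *)

(* Defs.v *)
From HB Require Import structures.
From mathcomp Require Import all_boot all_order all_algebra.
From mathcomp Require Import boolp classical_sets cardinality reals.
From mathcomp Require Import complex.
Set Implicit Arguments. Unset Strict Implicit. Unset Printing Implicit Defensive.
Import Order.TTheory GRing.Theory Num.Theory.
Local Open Scope classical_set_scope.
Local Open Scope ring_scope.

(* The base field K in {R, C}: [Kfield R true] is the reals, [Kfield R false]
   the complex numbers R[i], for a model R of the real numbers. *)
Definition Kfield (R : realType) (b : bool) : numFieldType :=
  if b then (R : numFieldType) else ((R[i])%C : numFieldType).

Section SpacesWithSheaves.
Variable K : numFieldType.

Definition Kopen (O : set K) : Prop :=
  forall x, O x -> exists2 e : K, 0 < e & forall y, `|y - x| < e -> O y.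

Definition is_topology (T : Type) (op : set (set T)) : Prop :=
  [/\ op setT, op set0,
      (forall A B, op A -> op B -> op (A `&` B)) &
      (forall (I : Type) (A : I -> set T), (forall i, op (A i)) -> op (\bigcup_i A i))].

Definition generated_topology (T : Type) (S : set (set T)) : set (set T) :=
  fun A => forall op, is_topology op -> S `<=` op -> op A.

(* Functions on U are represented by total functions T -> K, only their
   values on U matter (the sheaf axioms below force this). *)
Record sfstr (T : Type) := SFStr {
  sopen : set (set T);
  sfun  : set T -> set (T -> K) }.

Definition is_sfspace (T : Type) (s : sfstr T) : Prop :=
  [/\ is_topology (sopen s),
      (forall U, sopen s U ->
         [/\ forall c : K, sfun s U (fun _ => c),
             forall f g, sfun s U f -> sfun s U g -> sfun s U (fun x => f x + g x),
             forall f g, sfun s U f -> sfun s U g -> sfun s U (fun x => f x * g x) &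
             forall (a : K) f, sfun s U f -> sfun s U (fun x => a * f x)]),
      (forall U W f, sopen s U -> sopen s W -> W `<=` U -> sfun s U f -> sfun s W f) &
      (forall U (I : Type) (Ui : I -> set T) (f : T -> K),
         sopen s U -> (forall i, sopen s (Ui i)) -> U = \bigcup_i Ui i ->
         (forall i, exists2 g, sfun s (Ui i) g & forall x, Ui i x -> f x = g x) ->
         sfun s U f)].

Definition germ_at (T : Type) (s : sfstr T) (p : T) (f : T -> K) : Prop :=
  exists U, [/\ sopen s U, U p & sfun s U f].

Definition is_local (T : Type) (s : sfstr T) : Prop :=
  forall p U f, sopen s U -> U p -> sfun s U f -> f p != 0 ->
    exists W g, [/\ sopen s W, W p, W `<=` U, sfun s W g &
                    forall x, W x -> f x * g x = 1].

Definition in_mp2 (T : Type) (s : sfstr T) (p : T) (h : T -> K) : Prop :=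
  exists W (n : nat) (a b : 'I_n -> T -> K),
    [/\ sopen s W, W p,
        forall i, [/\ sfun s W (a i), sfun s W (b i), a i p = 0 & b i p = 0] &
        forall x, W x -> h x = \sum_(i < n) a i x * b i x].

Definition smooth (T1 T2 : Type) (s1 : sfstr T1) (s2 : sfstr T2) (psi : T1 -> T2) : Prop :=
  (forall B, sopen s2 B -> sopen s1 (psi @^-1` B)) /\
  (forall B f, sopen s2 B -> sfun s2 B f -> sfun s1 (psi @^-1` B) (f \o psi)).

Definition sf_iso (T1 T2 : Type) (s1 : sfstr T1) (s2 : sfstr T2) : Prop :=
  exists (psi : T1 -> T2) (chi : T2 -> T1),
    [/\ smooth s1 s2 psi, smooth s2 s1 chi, cancel psi chi & cancel chi psi].

Definition induced (T : Type) (s : sfstr T) (S : set T) : sfstr {x : T | S x} :=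
  @SFStr {x : T | S x}
    (fun A => exists2 B, sopen s B & A = (@proj1_sig T S) @^-1` B)
    (fun A f => (exists2 B, sopen s B & A = (@proj1_sig T S) @^-1` B) /\
       forall p, A p -> exists W B g,
         [/\ (exists2 B', sopen s B' & W = (@proj1_sig T S) @^-1` B'),
             W p, W `<=` A, sopen s B /\ sfun s B g &
             forall x, W x -> B (proj1_sig x) /\ f x = g (proj1_sig x)]).

Definition closed_in (T : Type) (s : sfstr T) (C : set T) : Prop := sopen s (~` C).

Definition locally_closed (T : Type) (s : sfstr T) (S : set T) : Prop :=
  exists A C, [/\ sopen s A, closed_in s C & S = A `&` C].

End SpacesWithSheaves.

Definition lin_functional (K : numFieldType) (V : vectType K) (phi : V -> K) : Prop :=
  forall (a : K) (u v : V), phi (a *: u + v) = a * phi u + phi v.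

Definition taylor_family (K : numFieldType) := forall V : vectType K, sfstr K V.

Definition is_taylor_family (K : numFieldType) (TF : taylor_family K) : Prop :=
  forall V : vectType K,
  (is_sfspace (TF V) /\ is_local (TF V)) /\
  [/\
      sopen (TF V) = generated_topology
        (fun A => exists f O, [/\ sfun (TF V) setT f, Kopen O & A = f @^-1` O]),
      (forall phi, lin_functional phi -> sfun (TF V) setT phi),
      (forall (W : vectType K) (U : set V) (psi : {x : V | U x} -> W),
         sopen (TF V) U ->
         (smooth (induced (TF V) U) (TF W) psi <->
          forall phi : W -> K, lin_functional phi ->
            sfun (induced (TF V) U) setT (phi \o psi))),
      (* (4) V^* -> m_p / m_p^2, phi |-> (phi - phi(p))_p, is a bijection
             (it is K-linear by construction) *)
      (forall p : V,
         (forall phi1 phi2, lin_functional phi1 -> lin_functional phi2 ->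
            in_mp2 (TF V) p (fun x => (phi1 x - phi1 p) - (phi2 x - phi2 p)) ->
            phi1 = phi2) /\
         (forall h, germ_at (TF V) p h -> h p = 0 ->
            exists2 phi, lin_functional phi &
              in_mp2 (TF V) p (fun x => h x - (phi x - phi p)))) &
      (* (5) d'f (p, v) = df_p(v) belongs to F^{V (+) V}(U x V) *)
      (forall (U : set V) (f : V -> K) (D : V -> V -> K),
         sopen (TF V) U -> sfun (TF V) U f ->
         (forall p, U p -> lin_functional (D p) /\
            in_mp2 (TF V) p (fun x => f x - f p - (D p x - D p p))) ->
         sfun (TF (V * V)%type) (U `*` setT) (fun pv => D pv.1 pv.2))].

Definition prevariety (K : numFieldType) (TF : taylor_family K)
    (T : Type) (s : sfstr K T) : Prop :=
  is_sfspace s /\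
  exists (I : Type) (Ui : I -> set T),
    [/\ countable [set: I], (forall i, sopen s (Ui i)), \bigcup_i Ui i = setT &
        forall i, exists (V : vectType K) (S : set V),
          locally_closed (TF V) S /\ sf_iso (induced s (Ui i)) (induced (TF V) S)].

Definition product_structure (K : numFieldType) (TF : taylor_family K)
    (T1 T2 : Type) (s1 : sfstr K T1) (s2 : sfstr K T2) (p : sfstr K (T1 * T2)) : Prop :=
  [/\ prevariety TF p,
      smooth p s1 fst, smooth p s2 snd &
      forall (T : Type) (s : sfstr K T) (psi1 : T -> T1) (psi2 : T -> T2),
        prevariety TF s -> smooth s s1 psi1 -> smooth s s2 psi2 ->
        smooth s p (fun x => (psi1 x, psi2 x))].

(* Main.v *)
Require Import Defs.
From mathcomp Require Import all_boot all_order all_algebra.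
From mathcomp Require Import boolp classical_sets cardinality reals complex.
Set Implicit Arguments. Unset Strict Implicit. Unset Printing Implicit Defensive.
Import GRing.Theory.
Local Open Scope classical_set_scope.

Lemma sf_top (K : numFieldType) T (s : sfstr K T) : is_sfspace s -> is_topology (sopen s).
Proof. by case. Qed.

Lemma openT (K : numFieldType) T (s : sfstr K T) : is_sfspace s -> sopen s setT.
Proof. by move=> /sf_top []. Qed.
Lemma open0 (K : numFieldType) T (s : sfstr K T) : is_sfspace s -> sopen s set0.
Proof. by move=> /sf_top []. Qed.
Lemma openI (K : numFieldType) T (s : sfstr K T) A B : is_sfspace s ->
  sopen s A -> sopen s B -> sopen s (A `&` B).
Proof. by move=> /sf_top [_ _ + _]; apply. Qed.
Lemma openU (K : numFieldType) T (s : sfstr K T) (I : Type) (A : I -> set T) :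
  is_sfspace s -> (forall i, sopen s (A i)) -> sopen s (\bigcup_i A i).
Proof. by move=> /sf_top [_ _ _]; apply. Qed.

Lemma local_open (K : numFieldType) T (s : sfstr K T) U : is_sfspace s ->
  (forall x, U x -> exists W, [/\ sopen s W, W x & W `<=` U]) -> sopen s U.
Proof.
move=> hs hU.
have -> : U = \bigcup_(W : {W : set T | sopen s W /\ W `<=` U}) proj1_sig W.
  apply/seteqP; split => x.
    move=> Ux; have [W [oW Wx WU]] := hU x Ux.
    by exists (exist _ W (conj oW WU)).
  by case=> [[W [oW WU]]] _ /= Wx; apply: WU.
by apply: openU => // -[W [oW WU]].
Qed.

Lemma sfun_ext (K : numFieldType) T (s : sfstr K T) U f g : is_sfspace s ->
  sopen s U -> sfun s U f -> (forall x, U x -> f x = g x) -> sfun s U g.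
Proof.
move=> [_ _ _ glue] oU sf fg.
apply: (glue U unit (fun _ => U)) => //.
  by apply/seteqP; split => x; [move=> Ux; exists tt | case].
by move=> _; exists f => // x Ux; rewrite fg.
Qed.

Lemma sfun_restr (K : numFieldType) T (s : sfstr K T) U W f : is_sfspace s ->
  sopen s U -> sopen s W -> W `<=` U -> sfun s U f -> sfun s W f.
Proof. by move=> [_ _ + _]; apply. Qed.

Lemma local_sfun (K : numFieldType) T (s : sfstr K T) U f : is_sfspace s -> sopen s U ->
  (forall x, U x -> exists W, [/\ sopen s W, W x, W `<=` U & sfun s W f]) -> sfun s U f.
Proof.
move=> hs oU hU; have [_ _ _ glue] := hs.
apply: (glue U {W : set T | [/\ sopen s W, W `<=` U & sfun s W f]} (@proj1_sig _ _)) => //.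
- by case=> W [].
- apply/seteqP; split => x.
    move=> Ux; have [W [oW Wx WU sW]] := hU x Ux.
    by exists (exist _ W (And3 oW WU sW)).
  by case=> [[W [oW WU sW]]] _ /= Wx; apply: WU.
- by case=> W [oW WU sW]; exists f.
Qed.

Section Alg.
Local Open Scope ring_scope.
Lemma sfun_cst (K : numFieldType) T (s : sfstr K T) U (c : K) : is_sfspace s ->
  sopen s U -> sfun s U (fun _ => c).
Proof. by move=> [_ alg _ _] oU; have [] := alg U oU. Qed.
Lemma sfun_add (K : numFieldType) T (s : sfstr K T) U f g : is_sfspace s ->
  sopen s U -> sfun s U f -> sfun s U g -> sfun s U (fun x => f x + g x).
Proof. by move=> [_ alg _ _] oU; have [] := alg U oU; auto. Qed.
Lemma sfun_mul (K : numFieldType) T (s : sfstr K T) U f g : is_sfspace s ->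
  sopen s U -> sfun s U f -> sfun s U g -> sfun s U (fun x => f x * g x).
Proof. by move=> [_ alg _ _] oU; have [] := alg U oU; auto. Qed.
Lemma sfun_scale (K : numFieldType) T (s : sfstr K T) U (a : K) f : is_sfspace s ->
  sopen s U -> sfun s U f -> sfun s U (fun x => a * f x).
Proof. by move=> [_ alg _ _] oU; have [] := alg U oU; auto. Qed.

Lemma sfun_sum (K : numFieldType) T (s : sfstr K T) U n (F : 'I_n -> T -> K) :
  is_sfspace s -> sopen s U -> (forall i, sfun s U (F i)) ->
  sfun s U (fun x => \sum_(i < n) F i x).
Proof.
move=> hs oU; elim: n F => [|n IH] F hF.
  by under [fun x => _]funext do rewrite big_ord0; apply: sfun_cst.
under [fun x => _]funext do rewrite big_ord_recr /=.
apply: sfun_add => //; first by apply: (IH (fun i => F (widen_ord _ i))).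
Qed.
End Alg.


Lemma sfun_induced (K : numFieldType) T (s : sfstr K T) (P : set T) B f :
  sopen s B -> sfun s B f ->
  sfun (induced s P) ((@proj1_sig T P) @^-1` B) (f \o (@proj1_sig T P)).
Proof.
move=> oB sB; split; first by exists B.
move=> p Bp; exists ((@proj1_sig T P) @^-1` B), B, f; split => //.
by exists B.
Qed.

Lemma sfun_descend (K : numFieldType) T (s : sfstr K T) (P : set T) A F G :
  is_sfspace s -> sopen s P -> sopen s A ->
  sfun (induced s P) ((@proj1_sig T P) @^-1` A) F ->
  (forall x (h : P x), A x -> G x = F (exist _ x h)) -> sfun s (P `&` A) G.
Proof.
move=> hs oP oA [_ sF] GF; apply: local_sfun => //; first exact: openI.
move=> x [Px Ax].
have [W [B [g [[B' oB' ->] /= B'x _ [oB sg] agr]]]] := sF (exist _ x Px) Ax.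
have [Bx _] := agr (exist _ x Px) B'x.
exists (P `&` A `&` B' `&` B); split.
- by repeat apply: openI.
- by do 3?split.
- by move=> z [[[]]].
apply: (@sfun_ext _ _ _ _ g); first by [].
- by repeat apply: openI.
- apply: (sfun_restr hs oB) => //; first by repeat apply: openI.
move=> z [[[Pz Az] B'z] Bz]; rewrite (GF z Pz Az).
by have [_ ->] := agr (exist _ z Pz) B'z.
Qed.

Lemma smooth_val (K : numFieldType) T (s : sfstr K T) (P : set T) :
  smooth (induced s P) s (@proj1_sig T P).
Proof.
split; first by move=> B oB; exists B.
by move=> B f oB sf; apply: sfun_induced.
Qed.

Lemma smooth_comp (K : numFieldType) T1 T2 T3 (s1 : sfstr K T1) (s2 : sfstr K T2)
  (s3 : sfstr K T3) (f : T1 -> T2) (g : T2 -> T3) :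
  smooth s1 s2 f -> smooth s2 s3 g -> smooth s1 s3 (g \o f).
Proof.
move=> [fo ff] [go gf]; split.
  by move=> B oB; apply: (fo (g @^-1` B)); apply: go.
by move=> B h oB sh; apply: (ff (g @^-1` B) (h \o g)); [apply: go | apply: gf].
Qed.

Lemma smooth_from_setT (K : numFieldType) T T' (s : sfstr K T) (s' : sfstr K T')
  (psi : T -> T') : is_sfspace s ->
  smooth (induced s setT) s' (psi \o (@proj1_sig T setT)) -> smooth s s' psi.
Proof.
move=> hs [ho hf].
have key : forall B, sopen s' B -> exists2 C, sopen s C &
   (psi @^-1` B = C /\ (psi \o (@proj1_sig T setT)) @^-1` B = (@proj1_sig T setT) @^-1` C).
  move=> B oB; have [C oC eC] := ho B oB; exists C => //; split => //.
  apply/seteqP; split => x.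
    by move=> Bx; have : ((psi \o (@proj1_sig T setT)) @^-1` B) (exist _ x I) by []; rewrite eC.
  by move=> Cx; have : ((@proj1_sig T setT) @^-1` C) (exist _ x I) by []; rewrite -eC.
split; first by move=> B oB; have [C oC [-> _]] := key B oB.
move=> B f oB sf; have [C oC [e1 e2]] := key B oB.
have := hf B f oB sf; rewrite e2 => sF.
rewrite e1 -(setTI C); apply: (sfun_descend hs (openT hs) oC sF).
by move=> x h _; rewrite /= .
Qed.

Lemma induced_sfspace (K : numFieldType) T (s : sfstr K T) (S : set T) :
  is_sfspace s -> is_sfspace (induced s S).
Proof.
move=> hs; set v := @proj1_sig T S.
have iopen : forall B, sopen s B -> sopen (induced s S) (v @^-1` B) by move=> B oB; exists B.
split.
- split.
  + by move: (iopen setT (openT hs)); rewrite preimage_setT.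
  + by move: (iopen set0 (open0 hs)); rewrite preimage_set0.
  + move=> A B [A' oA' ->] [B' oB' ->]; rewrite -preimage_setI; apply: iopen; exact: openI.
  + move=> I A oA.
    exists (\bigcup_(j : {i : I & {B : set T | sopen s B /\ A i = v @^-1` B}}) proj1_sig (projT2 j)).
      by apply: openU => // -[i [B []]].
    apply/seteqP; split => x.
      case=> i _ Aix; have [B oB eB] := oA i.
      by exists (existT _ i (exist _ B (conj oB eB))) => //=; move: Aix; rewrite eB.
    by case=> -[i [B [oB eB]]] _ /= Bx; exists i => //; rewrite eB.
- move=> U oU; split.
  + move=> c; split => // p Up; exists U, setT, (fun _ => c); split => //.
    by split; [apply: openT | apply: sfun_cst => //; apply: openT].
  + move=> f g [_ sf] [_ sg]; split => // p Up.
    have [W1 [B1 [g1 [oW1 W1p W1U [oB1 sg1] a1]]]] := sf p Up.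
    have [W2 [B2 [g2 [oW2 W2p W2U [oB2 sg2] a2]]]] := sg p Up.
    exists (W1 `&` W2), (B1 `&` B2), (fun x => (g1 x + g2 x)%R); split.
    * by case: oW1 => C1 oC1 ->; case: oW2 => C2 oC2 ->; rewrite -preimage_setI; apply: iopen; apply: openI.
    * by split.
    * by move=> z [] /W1U.
    * split; first exact: openI.
      apply: sfun_add => //; first exact: openI.
        by apply: (sfun_restr hs oB1 (openI hs oB1 oB2)) => // z [].
      by apply: (sfun_restr hs oB2 (openI hs oB1 oB2)) => // z [].
    * move=> z [/a1 [b1 e1] /a2 [b2 e2]]; by rewrite e1 e2.
  + move=> f g [_ sf] [_ sg]; split => // p Up.
    have [W1 [B1 [g1 [oW1 W1p W1U [oB1 sg1] a1]]]] := sf p Up.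
    have [W2 [B2 [g2 [oW2 W2p W2U [oB2 sg2] a2]]]] := sg p Up.
    exists (W1 `&` W2), (B1 `&` B2), (fun x => (g1 x * g2 x)%R); split.
    * by case: oW1 => C1 oC1 ->; case: oW2 => C2 oC2 ->; rewrite -preimage_setI; apply: iopen; apply: openI.
    * by split.
    * by move=> z [] /W1U.
    * split; first exact: openI.
      apply: sfun_mul => //; first exact: openI.
        by apply: (sfun_restr hs oB1 (openI hs oB1 oB2)) => // z [].
      by apply: (sfun_restr hs oB2 (openI hs oB1 oB2)) => // z [].
    * move=> z [/a1 [b1 e1] /a2 [b2 e2]]; by rewrite e1 e2.
  + move=> a f [_ sf]; split => // p Up.
    have [W1 [B1 [g1 [oW1 W1p W1U [oB1 sg1] a1]]]] := sf p Up.
    exists W1, B1, (fun x => (a * g1 x)%R); split => //.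
    * by split => //; apply: sfun_scale.
    * by move=> z /a1 [b1 ->].
- move=> U W f oU oW WU [_ sf]; split => // p Wp.
  have [W1 [B1 [g1 [oW1 W1p W1U [oB1 sg1] a1]]]] := sf p (WU _ Wp).
  exists (W `&` W1), B1, g1; split; [|by split|by move=> z []|by []|by move=> z [_ /a1]].
  by case: oW => C oC ->; case: oW1 => C1 oC1 ->; rewrite -preimage_setI; apply: iopen; apply: openI.
- move=> U I Ui f oU oUi eU hg; split => // p Up.
  have : (\bigcup_i Ui i) p by rewrite -eU.
  case=> i _ Uip; have [g [_ sg] fg] := hg i.
  have [W1 [B1 [g1 [oW1 W1p W1U [oB1 sg1] a1]]]] := sg p Uip.
  exists W1, B1, g1; split => //.
  + by move=> z /W1U Uiz; rewrite eU; exists i.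
  + by move=> z W1z; rewrite fg; [exact: a1 | exact: W1U].
Qed.

Lemma induced_setT_iso (K : numFieldType) T (s : sfstr K T) :
  is_sfspace s -> sf_iso (induced s setT) s.
Proof.
move=> hs; exists (@proj1_sig T setT), (fun x => exist _ x I); split.
- exact: smooth_val.
- split.
    by move=> C [A oA ->].
  move=> C F [A oA ->] sF; rewrite -(setTI A).
  apply: (sfun_descend hs (openT hs) oA sF).
  by move=> x h _ /=; congr F; congr exist; apply: Prop_irrelevance.
- by case=> x [].
- by [].
Qed.


Definition sm_on (K : numFieldType) T X (s : sfstr K T) (sX : sfstr K X) (O : set T)
  (c : T -> X) : Prop :=
  forall B, sopen sX B -> sopen s (O `&` c @^-1` B) /\
    (forall f, sfun sX B f -> sfun s (O `&` c @^-1` B) (f \o c)).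

Lemma TF_sf (K : numFieldType) (TF : taylor_family K) : is_taylor_family TF ->
  forall V : vectType K, is_sfspace (TF V).
Proof. by move=> H V; case: (H V) => [[]]. Qed.

Lemma TF_lin (K : numFieldType) (TF : taylor_family K) : is_taylor_family TF ->
  forall (V : vectType K) (phi : V -> K), lin_functional phi -> sfun (TF V) setT phi.
Proof. by move=> H V; case: (H V) => _ [_ h _ _ _]. Qed.

Lemma TF_smooth (K : numFieldType) (TF : taylor_family K) : is_taylor_family TF ->
  forall (V W : vectType K) (U : set V) (psi : {x : V | U x} -> W),
  sopen (TF V) U ->
  (forall phi : W -> K, lin_functional phi -> sfun (induced (TF V) U) setT (phi \o psi)) ->
  smooth (induced (TF V) U) (TF W) psi.
Proof. by move=> H V W U psi oU; case: (H V) => _ [_ _ h _ _]; move=> hp; apply: (proj2 (h W U psi oU)). Qed.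

Section LF.
Local Open Scope ring_scope.
Lemma lf0 (K : numFieldType) (V : vectType K) (phi : V -> K) : lin_functional phi -> phi 0 = 0.
Proof.
move=> H; have := H 1 0 0; rewrite scale1r addr0 mul1r => e.
by apply: (addrI (phi 0)); rewrite addr0 -e.
Qed.
Lemma lfD (K : numFieldType) (V : vectType K) (phi : V -> K) : lin_functional phi ->
  forall u v, phi (u + v) = phi u + phi v.
Proof. by move=> H u v; have := H 1 u v; rewrite scale1r mul1r. Qed.
Lemma lfZ (K : numFieldType) (V : vectType K) (phi : V -> K) : lin_functional phi ->
  forall a u, phi (a *: u) = a * phi u.
Proof. by move=> H a u; have := H a u 0; rewrite !addr0 (lf0 H) addr0. Qed.
Lemma lf_sum (K : numFieldType) (V : vectType K) (phi : V -> K) n (c : 'I_n -> K)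
  (e : 'I_n -> V) : lin_functional phi ->
  phi (\sum_(i < n) c i *: e i) = \sum_(i < n) c i * phi (e i).
Proof.
move=> H; rewrite (big_morph phi (lfD H) (lf0 H)); apply: eq_bigr => i _.
exact: lfZ.
Qed.
Lemma lf_pair (K : numFieldType) (V W : vectType K) (phi : (V * W)%type -> K) v w :
  lin_functional phi -> phi (v, w) = phi (v, 0) + phi (0, w).
Proof.
move=> H; rewrite -(lfD H); congr phi.
by apply/eqP; rewrite xpair_eqE /= addr0 add0r !eqxx.
Qed.
End LF.

Lemma lin_smooth (K : numFieldType) (TF : taylor_family K) (HTF : is_taylor_family TF)
  (X V : vectType K) (L : X -> V) :
  (forall phi : V -> K, lin_functional phi -> lin_functional (phi \o L)) ->
  smooth (TF X) (TF V) L.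
Proof.
move=> hL; apply: smooth_from_setT; first exact: TF_sf.
apply: TF_smooth => //; first by apply: openT; apply: TF_sf.
move=> phi lphi.
have := sfun_induced setT (openT (TF_sf HTF X)) (TF_lin HTF (hL phi lphi)).
by rewrite preimage_setT.
Qed.

Definition kappa (K : numFieldType) T (U : vectType K) (Tk : set T) (S : set U)
  (phi : {x : T | Tk x} -> {u : U | S u}) (t : T) : U :=
  match pselect (Tk t) with
  | left h => proj1_sig (phi (exist _ t h))
  | right _ => 0%R
  end.

Lemma kappaE (K : numFieldType) T (U : vectType K) (Tk : set T) (S : set U)
  (phi : {x : T | Tk x} -> {u : U | S u}) t (h : Tk t) :
  kappa phi t = proj1_sig (phi (exist _ t h)).
Proof. by rewrite /kappa; case: pselect => [h'|//]; rewrite (Prop_irrelevance h h'). Qed.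

Lemma kappa_sm (K : numFieldType) (TF : taylor_family K) T (s : sfstr K T)
  (U : vectType K) (Tk : set T) (S : set U) (phi : {x : T | Tk x} -> {u : U | S u}) :
  is_sfspace s -> sopen s Tk -> smooth (induced s Tk) (induced (TF U) S) phi ->
  sm_on s (TF U) Tk (kappa phi).
Proof.
move=> hs oTk [po pf] B oB.
have oi : sopen (induced (TF U) S) ((@proj1_sig U S) @^-1` B) by exists B.
have [A0 oA0 eA0] := po _ oi.
have E : Tk `&` kappa phi @^-1` B = Tk `&` A0.
  apply/seteqP; split => t [h Bt]; split => //.
    have : (phi @^-1` ((@proj1_sig U S) @^-1` B)) (exist _ t h).
      by rewrite /= -(kappaE phi h).
    by rewrite eA0.
  rewrite /= (kappaE phi h).
  have : ((@proj1_sig T Tk) @^-1` A0) (exist _ t h) by [].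
  by rewrite -eA0.
split; first by rewrite E; apply: openI.
move=> f sf; rewrite E.
apply: (sfun_descend (F := (f \o (@proj1_sig U S)) \o phi) hs oTk oA0).
  by rewrite -eA0; exact: pf _ _ oi (sfun_induced _ oB sf).
by move=> x h _; rewrite /= (kappaE phi h).
Qed.

Lemma sm_on_comp (K : numFieldType) T T' X (s : sfstr K T) (s' : sfstr K T')
  (sX : sfstr K X) (a : T -> T') (O : set T') (c : T' -> X) :
  smooth s s' a -> sm_on s' sX O c -> sm_on s sX (a @^-1` O) (c \o a).
Proof.
move=> [ao af] h B oB; have [o1 f1] := h B oB; split; first exact: (ao _ o1).
by move=> f sf; exact: (af _ _ o1 (f1 f sf)).
Qed.

Lemma sm_on_sub (K : numFieldType) T X (s : sfstr K T) (sX : sfstr K X) O O' c :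
  is_sfspace s -> sopen s O' -> O' `<=` O -> sm_on s sX O c -> sm_on s sX O' c.
Proof.
move=> hs oO' sO h B oB; have [o1 f1] := h B oB.
have E : O' `&` c @^-1` B = O' `&` (O `&` c @^-1` B).
  by apply/seteqP; split => x [Ox Bx]; [split=> //; split=> //; apply: sO | case: Bx].
rewrite E; split; first exact: openI.
move=> f sf; apply: (sfun_restr hs o1); [exact: openI | by move=> x [] | exact: f1].
Qed.

Lemma sm_on_coord (K : numFieldType) (TF : taylor_family K) (HTF : is_taylor_family TF)
  T (s : sfstr K T) (V : vectType K) O (a : T -> V) (phi : V -> K) :
  sm_on s (TF V) O a -> lin_functional phi -> sfun s O (phi \o a).
Proof.
move=> h lp; have [_ f1] := h setT (openT (TF_sf HTF V)).
by have := f1 phi (TF_lin HTF lp); rewrite preimage_setT setIT.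
Qed.


Lemma ext_chart (K : numFieldType) (TF : taylor_family K) T (s : sfstr K T)
  (U : vectType K) (Tk : set T) (S : set U) phi chi O h t :
  is_sfspace s -> sopen s Tk -> smooth (induced s Tk) (induced (TF U) S) phi ->
  smooth (induced (TF U) S) (induced s Tk) chi -> cancel phi chi ->
  sopen s O -> sfun s O h -> O t -> Tk t ->
  exists B'' g A, [/\ sopen (TF U) B'' /\ sfun (TF U) B'' g, sopen s A, A t,
    A `<=` O `&` Tk & forall t', A t' -> B'' (kappa phi t') /\ h t' = g (kappa phi t')].
Proof.
move=> hs oTk [po _] [co cf] phiK oO sh Ot Tkt.
have sh1 := sfun_induced Tk oO sh.
have oi : sopen (induced s Tk) ((@proj1_sig T Tk) @^-1` O) by exists O.
have [_ sh2] := cf _ _ oi sh1.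
have y0in : (chi @^-1` ((@proj1_sig T Tk) @^-1` O)) (phi (exist _ t Tkt)).
  by rewrite /= phiK.
have [W [B'' [g [[B' oB' eW] Wy0 WS [oB'' sg] agr]]]] := sh2 _ y0in.
have oW : sopen (induced (TF U) S) W by exists B'.
have [A0 oA0 eA0] := po W oW.
exists B'', g, (O `&` Tk `&` A0); split; first by [].
- by apply: openI => //; apply: openI.
- split; first by [].
  by have : (phi @^-1` W) (exist _ t Tkt) by []; rewrite eA0.
- by move=> z [].
- move=> t' [[Ot' Tkt'] A0t'].
have inW : W (phi (exist _ t' Tkt')).
  by have : ((@proj1_sig T Tk) @^-1` A0) (exist _ t' Tkt') by []; rewrite -eA0.
have [Bg eg] := agr _ inW.
rewrite (kappaE phi Tkt'); split => //.
by move: eg; rewrite /= phiK.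
Qed.

Lemma ext_chart_n (K : numFieldType) (TF : taylor_family K) (HTF : is_taylor_family TF)
  T (s : sfstr K T)
  (U : vectType K) (Tk : set T) (S : set U) phi chi O t :
  is_sfspace s -> sopen s Tk -> smooth (induced s Tk) (induced (TF U) S) phi ->
  smooth (induced (TF U) S) (induced s Tk) chi -> cancel phi chi ->
  sopen s O -> O t -> Tk t ->
  forall n (hh : nat -> T -> K), (forall i, (i < n)%N -> sfun s O (hh i)) ->
  exists B'' (gs : nat -> U -> K) A, [/\ sopen (TF U) B'' /\ forall i, sfun (TF U) B'' (gs i),
    sopen s A, A t, A `<=` O `&` Tk &
    forall t', A t' -> B'' (kappa phi t') /\
      forall i, (i < n)%N -> hh i t' = gs i (kappa phi t')].
Proof.
move=> hs oTk sphi schi phiK oO Ot Tkt; have hU := TF_sf HTF U.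
elim=> [|n IH] hh sh.
  exists setT, (fun _ _ => 0%R), (O `&` Tk); split => //.
  - split; first exact: openT.
    by move=> i; apply: sfun_cst => //; exact: openT.
  - exact: openI.
have [B1 [gs [A1 [[oB1 sgs] oA1 A1t A1s a1]]]] := IH hh (fun i hi => sh i (ltnW hi)).
have [B2 [g [A2 [[oB2 sg] oA2 A2t A2s a2]]]] :=
  ext_chart hs oTk sphi schi phiK oO (sh n (ltnSn n)) Ot Tkt.
exists (B1 `&` B2), (fun i => if i == n then g else gs i), (A1 `&` A2); split.
- split; first exact: openI.
  move=> i; case: (i == n).
    by apply: (sfun_restr hU oB2 (openI hU oB1 oB2)) => // z [].
  by apply: (sfun_restr hU oB1 (openI hU oB1 oB2)) => // z [].
- exact: openI.
- by split.
- by move=> z [/A1s].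
move=> t' [/a1 [B1t e1] /a2 [B2t e2]]; split; first by split.
move=> i; rewrite ltnS leq_eqVlt; case: eqP => [-> _ //|_ /= hi].
exact: e1.
Qed.


Section LF2.
Local Open Scope ring_scope.
Lemma lf_fst (K : numFieldType) (V W : vectType K) (phi : (V * W)%type -> K) :
  lin_functional phi -> lin_functional (fun v : V => phi (v, 0)).
Proof.
move=> H a u v; rewrite -H; congr phi.
by apply/eqP; rewrite xpair_eqE /= scaler0 addr0 !eqxx.
Qed.
Lemma lf_snd (K : numFieldType) (V W : vectType K) (phi : (V * W)%type -> K) :
  lin_functional phi -> lin_functional (fun w : W => phi (0, w)).
Proof.
move=> H a u v; rewrite -H; congr phi.
by apply/eqP; rewrite xpair_eqE /= scaler0 addr0 !eqxx.
Qed.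
Lemma lin_coord (K : numFieldType) (V : vectType K) n (X : n.-tuple V) (i : 'I_n) :
  lin_functional (coord X i).
Proof. by move=> a u v; rewrite linearP. Qed.
End LF2.

Lemma hl_local (K : numFieldType) (TF : taylor_family K) (HTF : is_taylor_family TF)
  T (s : sfstr K T) (U : vectType K) (Tk : set T) (S : set U) phi chi
  (V W : vectType K) O (a : T -> V) (b : T -> W) t :
  is_sfspace s -> sopen s Tk -> smooth (induced s Tk) (induced (TF U) S) phi ->
  smooth (induced (TF U) S) (induced s Tk) chi -> cancel phi chi ->
  sopen s O -> sm_on s (TF V) O a -> sm_on s (TF W) O b -> O t -> Tk t ->
  exists N, [/\ sopen s N, N t, N `<=` O &
    sm_on s (TF (V * W)%type) N (fun x => (a x, b x))].
Proof.
move=> hs oTk sphi schi phiK oO ha hb Ot Tkt; have hU := TF_sf HTF U.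
pose dV := \dim (fullv : {vspace V}); pose ev := vbasis (fullv : {vspace V}).
pose dW := \dim (fullv : {vspace W}); pose ew := vbasis (fullv : {vspace W}).
pose hA := fun (i : nat) (x : T) =>
  match (insub i : option 'I_dV) with Some j => coord ev j (a x) | None => 0%R end.
pose hB := fun (i : nat) (x : T) =>
  match (insub i : option 'I_dW) with Some j => coord ew j (b x) | None => 0%R end.
have shA : forall i, (i < dV)%N -> sfun s O (hA i).
  move=> i _; rewrite /hA; case: insub => [j|]; last exact: sfun_cst.
  exact: (sm_on_coord HTF ha (lin_coord ev j)).
have shB : forall i, (i < dW)%N -> sfun s O (hB i).
  move=> i _; rewrite /hB; case: insub => [j|]; last exact: sfun_cst.
  exact: (sm_on_coord HTF hb (lin_coord ew j)).
have [B1 [gA [A1 [[oB1 sgA] oA1 A1t A1s a1]]]] :=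
  ext_chart_n HTF hs oTk sphi schi phiK oO Ot Tkt shA.
have [B2 [gB [A2 [[oB2 sgB] oA2 A2t A2s a2]]]] :=
  ext_chart_n HTF hs oTk sphi schi phiK oO Ot Tkt shB.
pose O' := B1 `&` B2.
have oO' : sopen (TF U) O' by exact: openI.
pose Gt : U -> (V * W)%type := fun u =>
  (\sum_(i < dV) gA i u *: ev`_i, \sum_(j < dW) gB j u *: ew`_j)%R.
have Gsm : smooth (induced (TF U) O') (TF (V * W)%type) (Gt \o (@proj1_sig U O')).
  apply: TF_smooth => // ph lph.
  pose H := fun u => (\sum_(i < dV) gA i u * ph (ev`_i, 0)
                    + \sum_(j < dW) gB j u * ph (0, ew`_j))%R.
  have sH : sfun (TF U) O' H.
    apply: sfun_add => //.
      apply: (sfun_sum (F := fun i u => (gA i u * ph (ev`_i, 0))%R)) => // i.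
      apply: sfun_mul => //; last exact: sfun_cst.
      by apply: (sfun_restr hU oB1 oO') => // z [].
    apply: (sfun_sum (F := fun i u => (gB i u * ph (0, ew`_i))%R)) => // i.
    apply: sfun_mul => //; last exact: sfun_cst.
    by apply: (sfun_restr hU oB2 oO') => // z [].
  have := sfun_induced O' oO' sH.
  have -> : (@proj1_sig U O') @^-1` O' = setT by apply/seteqP; split => // -[u hu].
  have -> : ph \o (Gt \o (@proj1_sig U O')) = H \o (@proj1_sig U O') => //.
  apply: funext => -[u hu]; rewrite /= /H /Gt (lf_pair _ _ lph).
  rewrite (lf_sum (fun i : 'I_dV => gA i u) (fun i : 'I_dV => ev`_i)%R (lf_fst lph)).
  by rewrite (lf_sum (fun i : 'I_dW => gB i u) (fun i : 'I_dW => ew`_i)%R (lf_snd lph)).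
have key : forall t', A1 t' -> A2 t' ->
    O' (kappa phi t') /\ (a t', b t') = Gt (kappa phi t').
  move=> t' /a1 [B1t e1] /a2 [B2t e2]; split; first by split.
  rewrite /Gt (coord_vbasis (memvf (a t'))) (coord_vbasis (memvf (b t'))).
  congr pair; apply: eq_bigr => i _; congr (_ *: _)%R.
    by rewrite -e1 // /hA valK.
  by rewrite -e2 // /hB valK.
have smk := kappa_sm hs oTk sphi.
exists (A1 `&` A2); split.
- exact: openI.
- by split.
- by move=> z [/A1s []].
move=> B oB.
have [Go Gf] := Gsm; have [B3 oB3 eB3] := Go B oB.
have key3 : forall u, O' u -> (B (Gt u) <-> B3 u).
  move=> u h.
  have : ((Gt \o (@proj1_sig U O')) @^-1` B) (exist _ u h) =
         ((@proj1_sig U O') @^-1` B3) (exist _ u h) by rewrite eB3.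
  by move=> /= ->.
have [o3 _] := smk B3 oB3.
have E : A1 `&` A2 `&` (fun x => (a x, b x)) @^-1` B =
         A1 `&` A2 `&` (Tk `&` kappa phi @^-1` B3).
  apply/seteqP; split => x [[A1x A2x] Bx]; have [O'x ex] := key x A1x A2x.
    split => //; split; first by have [] := A1s x A1x.
    by apply/(key3 _ O'x); rewrite -ex.
  by split => //; rewrite /= ex; apply/(key3 _ O'x); case: Bx.
have oE : sopen s (A1 `&` A2 `&` (fun x => (a x, b x)) @^-1` B).
  by rewrite E; apply: openI => //; apply: openI.
split => // f sf.
have := Gf B f oB sf; rewrite eB3 => -[_ sfG].
apply: local_sfun => // x [[A1x A2x] Bx]; have [O'x ex] := key x A1x A2x.
have u0in : ((@proj1_sig U O') @^-1` B3) (exist _ (kappa phi x) O'x).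
  by rewrite /=; apply/(key3 _ O'x); rewrite -ex.
have [W5 [B6 [g6 [[B5 oB5 eW5] W5u0 W5s [oB6 sg6] agr]]]] := sfG _ u0in.
have [o5 _] := smk B5 oB5; have [o6 f6] := smk B6 oB6.
have sg6k := f6 g6 sg6.
pose Nb := A1 `&` A2 `&` (Tk `&` kappa phi @^-1` B5) `&` (Tk `&` kappa phi @^-1` B6).
have oNb : sopen s Nb by apply: (openI hs (openI hs (openI hs oA1 oA2) o5) o6).
have [B6x _] := agr _ W5u0.
have Nbx : Nb x.
  split; first split; first by split.
  - split; first by have [] := A1s x A1x.
    by move: W5u0; rewrite eW5.
  - by split; first by have [] := A1s x A1x.
have Nbsub : forall z, Nb z -> exists2 hz : O' (kappa phi z),
    W5 (exist _ (kappa phi z) hz) & (a z, b z) = Gt (kappa phi z).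
  move=> z [[[A1z A2z] [_ B5z]] _]; have [O'z ez] := key z A1z A2z.
  by exists O'z => //; rewrite eW5.
exists Nb; split => //.
- move=> z Nbz; have [hz W5z ez] := Nbsub z Nbz.
  case: Nbz => [[[A1z A2z] _] _]; split; first by split.
  rewrite /= ez; apply/(key3 _ hz); exact: (W5s _ W5z).
- apply: (sfun_ext hs oNb (f := g6 \o kappa phi)).
    by apply: (sfun_restr hs o6 oNb) => // z [].
  move=> z Nbz; have [hz W5z ez] := Nbsub z Nbz; have [_ e] := agr _ W5z.
  by rewrite /= ez; move: e => /= ->.
Qed.

Lemma HL (K : numFieldType) (TF : taylor_family K) (HTF : is_taylor_family TF)
  T (s : sfstr K T) (V W : vectType K) O (a : T -> V) (b : T -> W) :
  prevariety TF s -> sopen s O -> sm_on s (TF V) O a -> sm_on s (TF W) O b ->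
  sm_on s (TF (V * W)%type) O (fun x => (a x, b x)).
Proof.
move=> [hs [I [Ui [_ oUi cover charts]]]] oO ha hb.
have loc : forall x, O x -> exists N, [/\ sopen s N, N x, N `<=` O &
    sm_on s (TF (V * W)%type) N (fun x => (a x, b x))].
  move=> x Ox; have : (\bigcup_i Ui i) x by rewrite cover.
  case=> k _ Ukx; have [U' [S [_ [phi [chi [sphi schi phiK _]]]]]] := charts k.
  exact: (hl_local HTF hs (oUi k) sphi schi phiK oO ha hb Ox Ukx).
move=> B oB.
have oP : sopen s (O `&` (fun x => (a x, b x)) @^-1` B).
  apply: local_open => // x [Ox Bx]; have [N [oN Nx NO sN]] := loc x Ox.
  have [o _] := sN B oB; exists (N `&` (fun x => (a x, b x)) @^-1` B); split => //.
  by move=> z [/NO].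
split => // f sf; apply: local_sfun => // x [Ox Bx].
have [N [oN Nx NO sN]] := loc x Ox; have [o fN] := sN B oB.
exists (N `&` (fun x => (a x, b x)) @^-1` B); split => //; last exact: fN.
by move=> z [/NO].
Qed.


Lemma countable_unit : countable [set: unit].
Proof.
have -> : [set: unit] = [set tt] by apply/seteqP; split => // -[].
exact/finite_set_countable/finite_set1.
Qed.

Lemma sig_eq T (P : T -> Prop) (x y : {z : T | P z}) : proj1_sig x = proj1_sig y -> x = y.
Proof.
case: x => x hx; case: y => y hy /= e; subst y.
by rewrite (Prop_irrelevance hx hy).
Qed.

Lemma openU2 (K : numFieldType) T (s : sfstr K T) A B : is_sfspace s ->
  sopen s A -> sopen s B -> sopen s (A `|` B).
Proof.
move=> hs oA oB.
have -> : A `|` B = \bigcup_(i : bool) (if i then A else B).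
  apply/seteqP; split => x.
    by case=> h; [exists true | exists false].
  by case=> -[] _ h; [left | right].
by apply: openU => // -[].
Qed.

Lemma smooth_fst (K : numFieldType) (TF : taylor_family K) (HTF : is_taylor_family TF)
  (V W : vectType K) : smooth (TF (V * W)%type) (TF V) fst.
Proof. by apply: lin_smooth => // phi H a u v; exact: H. Qed.
Lemma smooth_snd (K : numFieldType) (TF : taylor_family K) (HTF : is_taylor_family TF)
  (V W : vectType K) : smooth (TF (V * W)%type) (TF W) snd.
Proof. by apply: lin_smooth => // phi H a u v; exact: H. Qed.

Lemma smooth_restrict (K : numFieldType) X Y (sX : sfstr K X) (sY : sfstr K Y)
  (L : X -> Y) (S : set X) (S1 : set Y) (r : {y : X | S y} -> {v : Y | S1 v}) :
  (forall y, proj1_sig (r y) = L (proj1_sig y)) -> smooth sX sY L ->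
  smooth (induced sX S) (induced sY S1) r.
Proof.
move=> rE [Lo Lf].
have pre : forall B, r @^-1` ((@proj1_sig Y S1) @^-1` B) = (@proj1_sig X S) @^-1` (L @^-1` B).
  by move=> B; apply/seteqP; split => y /=; rewrite rE.
split; first by move=> C [B oB ->]; exists (L @^-1` B); [exact: Lo | exact: pre].
move=> C f [B oB ->] [_ hf]; split; first by exists (L @^-1` B); [exact: Lo | exact: pre].
move=> y Cy; have [W1 [Bg [g [[B1 oB1 eW1] W1y W1C [oBg sg] agr]]]] := hf (r y) Cy.
exists (r @^-1` W1), (L @^-1` Bg), (g \o L); split.
- by exists (L @^-1` B1); [exact: Lo | rewrite eW1; exact: pre].
- by [].
- by move=> z /W1C.
- by split; [exact: Lo | exact: Lf].
- by move=> z /agr; rewrite rE.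
Qed.

Definition pstr (K : numFieldType) (TF : taylor_family K) M N
  (sM : sfstr K M) (sN : sfstr K N) : sfstr K (M * N) :=
  @SFStr K (M * N)
    (fun A => forall (T : Type) (s : sfstr K T) (a : T -> M) (b : T -> N),
       prevariety TF s -> smooth s sM a -> smooth s sN b ->
       sopen s ((fun x => (a x, b x)) @^-1` A))
    (fun A f => (forall (T : Type) (s : sfstr K T) (a : T -> M) (b : T -> N),
       prevariety TF s -> smooth s sM a -> smooth s sN b ->
       sopen s ((fun x => (a x, b x)) @^-1` A)) /\
     (forall (T : Type) (s : sfstr K T) (a : T -> M) (b : T -> N),
       prevariety TF s -> smooth s sM a -> smooth s sN b ->
       sfun s ((fun x => (a x, b x)) @^-1` A) (f \o (fun x => (a x, b x))))).

Lemma pstr_sf (K : numFieldType) (TF : taylor_family K) M N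
  (sM : sfstr K M) (sN : sfstr K N) : is_sfspace (pstr TF sM sN).
Proof.
split.
- split.
  + by move=> T s a b [hs _] _ _; rewrite preimage_setT; exact: openT.
  + by move=> T s a b [hs _] _ _; rewrite preimage_set0; exact: open0.
  + move=> A B oA oB T s a b hp ha hb; rewrite preimage_setI.
    by apply: openI; [case: hp | exact: oA | exact: oB].
  + move=> I A oA T s a b hp ha hb; rewrite preimage_bigcup.
    by apply: openU; [case: hp | move=> i; exact: oA].
- move=> U oU; split.
  + move=> c; split => // T s a b hp ha hb; have hs : is_sfspace s by case: hp.
    by apply: sfun_cst => //; exact: (oU _ _ _ _ hp ha hb).
  + move=> f g [_ sf] [_ sg]; split => // T s a b hp ha hb.
    have hs : is_sfspace s by case: hp.
    exact: (sfun_add hs (oU _ _ _ _ hp ha hb) (sf _ _ _ _ hp ha hb) (sg _ _ _ _ hp ha hb)).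
  + move=> f g [_ sf] [_ sg]; split => // T s a b hp ha hb.
    have hs : is_sfspace s by case: hp.
    exact: (sfun_mul hs (oU _ _ _ _ hp ha hb) (sf _ _ _ _ hp ha hb) (sg _ _ _ _ hp ha hb)).
  + move=> c f [_ sf]; split => // T s a b hp ha hb.
    have hs : is_sfspace s by case: hp.
    exact: (sfun_scale c hs (oU _ _ _ _ hp ha hb) (sf _ _ _ _ hp ha hb)).
- move=> U W f oU oW WU [_ sf]; split => // T s a b hp ha hb.
  have hs : is_sfspace s by case: hp.
  apply: (sfun_restr hs (oU _ _ _ _ hp ha hb) (oW _ _ _ _ hp ha hb)); last exact: sf.
  by move=> x /WU.
- move=> U I Ui f oU oUi eU hg; split => // T s a b hp ha hb.
  have [hs _] := hp; have [_ _ _ glue] := hs.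
  apply: (glue _ I (fun i => (fun x => (a x, b x)) @^-1` Ui i)).
  + exact: oU.
  + by move=> i; exact: oUi.
  + by rewrite eU preimage_bigcup.
  + move=> i; have [g [_ sg] fg] := hg i; exists (g \o (fun x => (a x, b x))).
      exact: sg.
    by move=> x /fg.
Qed.

Lemma lc_prod (K : numFieldType) (TF : taylor_family K) (HTF : is_taylor_family TF)
  (V W : vectType K) (S1 : set V) (S2 : set W) :
  locally_closed (TF V) S1 -> locally_closed (TF W) S2 ->
  locally_closed (TF (V * W)%type) (S1 `*` S2).
Proof.
have hX := TF_sf HTF (V * W)%type.
have [Fo _] := smooth_fst HTF V W.
have [So _] := smooth_snd HTF V W.
move=> [A1 [C1 [oA1 cC1 e1]]] [A2 [C2 [oA2 cC2 e2]]].
exists (fst @^-1` A1 `&` snd @^-1` A2), (fst @^-1` C1 `&` snd @^-1` C2).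
split.
- exact: (openI hX (Fo _ oA1) (So _ oA2)).
- rewrite /closed_in.
  have -> : ~` (fst @^-1` C1 `&` snd @^-1` C2) = fst @^-1` (~` C1) `|` snd @^-1` (~` C2).
    apply/seteqP; split => -[x y] /=.
      move=> h; case: (pselect (C1 x)) => c1; last by left.
      by right => c2; apply: h.
    by case=> h [].
  exact: (openU2 hX (Fo _ cC1) (So _ cC2)).
- rewrite e1 e2; apply/seteqP; split => -[x y] /=.
    by move=> [[? ?] [? ?]].
  by move=> [[? ?] [? ?]].
Qed.



Lemma sig_val_exist T (P : T -> Prop) (x : {z : T | P z}) (h : P (proj1_sig x)) :
  exist P (proj1_sig x) h = x.
Proof. exact: sig_eq. Qed.

Definition pr1 (A B : Prop) (h : A /\ B) : A := let: conj a _ := h in a.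
Definition pr2 (A B : Prop) (h : A /\ B) : B := let: conj _ b := h in b.

Lemma chart_iso (K : numFieldType) (TF : taylor_family K) (HTF : is_taylor_family TF)
  M N (sM : sfstr K M) (sN : sfstr K N) (Ui : set M) (Vj : set N)
  (V W : vectType K) (S1 : set V) (S2 : set W) phi1 chi1 phi2 chi2 :
  is_sfspace sM -> is_sfspace sN -> sopen sM Ui -> sopen sN Vj ->
  locally_closed (TF V) S1 -> locally_closed (TF W) S2 ->
  smooth (induced sM Ui) (induced (TF V) S1) phi1 ->
  smooth (induced (TF V) S1) (induced sM Ui) chi1 -> cancel phi1 chi1 -> cancel chi1 phi1 ->
  smooth (induced sN Vj) (induced (TF W) S2) phi2 ->
  smooth (induced (TF W) S2) (induced sN Vj) chi2 -> cancel phi2 chi2 -> cancel chi2 phi2 ->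
  sf_iso (induced (pstr TF sM sN) (Ui `*` Vj)) (induced (TF (V * W)%type) (S1 `*` S2)).
Proof.
move=> hM hN oUi oVj lc1 lc2 sphi1 schi1 phi1K chi1K sphi2 schi2 phi2K chi2K.
have hX := TF_sf HTF (V * W)%type.
have sk1 := kappa_sm hM oUi sphi1; have sk2 := kappa_sm hN oVj sphi2.
pose Psi := fun z : M * N => (kappa phi1 z.1, kappa phi2 z.2).
have popen : forall B0 g, sopen (TF (V * W)%type) B0 -> sfun (TF (V * W)%type) B0 g ->
    sfun (pstr TF sM sN) ((Ui `*` Vj) `&` Psi @^-1` B0) (g \o Psi).
  move=> B0 g oB0 sg.
  have key : forall T (s : sfstr K T) a b, prevariety TF s -> smooth s sM a -> smooth s sN b ->
      sm_on s (TF (V * W)%type) (a @^-1` Ui `&` b @^-1` Vj)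
        (fun x => (kappa phi1 (a x), kappa phi2 (b x))).
    move=> T s a b hp ha hb; have hs : is_sfspace s by case: hp.
    have oO : sopen s (a @^-1` Ui `&` b @^-1` Vj).
      by apply: openI => //; [apply: (proj1 ha) | apply: (proj1 hb)].
    apply: (HL HTF hp oO).
      by apply: (sm_on_sub hs oO _ (sm_on_comp ha sk1)) => x [].
    by apply: (sm_on_sub hs oO _ (sm_on_comp hb sk2)) => x [].
  split.
    by move=> T s a b hp ha hb; exact: (proj1 (key T s a b hp ha hb B0 oB0)).
  by move=> T s a b hp ha hb; exact: (proj2 (key T s a b hp ha hb B0 oB0) g sg).
pose psi : {z : M * N | (Ui `*` Vj) z} -> {y : (V * W)%type | (S1 `*` S2) y} :=
  fun z => exist _ (proj1_sig (phi1 (exist _ (proj1_sig z).1 (pr1 (proj2_sig z)))),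
                    proj1_sig (phi2 (exist _ (proj1_sig z).2 (pr2 (proj2_sig z)))))
           (conj (proj2_sig (phi1 _)) (proj2_sig (phi2 _))).
pose chi : {y : (V * W)%type | (S1 `*` S2) y} -> {z : M * N | (Ui `*` Vj) z} :=
  fun y => exist _ (proj1_sig (chi1 (exist _ (proj1_sig y).1 (pr1 (proj2_sig y)))),
                    proj1_sig (chi2 (exist _ (proj1_sig y).2 (pr2 (proj2_sig y)))))
           (conj (proj2_sig (chi1 _)) (proj2_sig (chi2 _))).
have psiE : forall z, proj1_sig (psi z) = Psi (proj1_sig z).
  move=> [[m n] [hm hn]]; rewrite /Psi /= (kappaE phi1 hm) (kappaE phi2 hn). by [].
pose a0 := fun y => (proj1_sig (chi y)).1.
pose b0 := fun y => (proj1_sig (chi y)).2.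
have chiE : forall y, proj1_sig (chi y) = (a0 y, b0 y) by [].
have oP : forall B0, sopen (TF (V * W)%type) B0 ->
    sopen (pstr TF sM sN) ((Ui `*` Vj) `&` Psi @^-1` B0).
  by move=> B0 oB0; case: (popen B0 _ oB0 (sfun_cst 0%R hX oB0)).
have pre : forall B0, psi @^-1` ((@proj1_sig _ (S1 `*` S2)) @^-1` B0) =
    (@proj1_sig _ (Ui `*` Vj)) @^-1` ((Ui `*` Vj) `&` Psi @^-1` B0).
  move=> B0; apply/seteqP; split => z h.
    change (B0 (proj1_sig (psi z))) in h; rewrite psiE in h.
    by split => //; exact: (proj2_sig z).
  case: h => _ h; change (B0 (proj1_sig (psi z))); by rewrite psiE.
have lcS := lc_prod HTF lc1 lc2.
have hS := induced_sfspace (S1 `*` S2) hX.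
have prevS : prevariety TF (induced (TF (V * W)%type) (S1 `*` S2)).
  split => //; exists unit, (fun _ => setT); split.
  - exact: countable_unit.
  - by move=> _; exact: openT.
  - by apply/seteqP; split => // y _; exists tt.
  - by move=> _; exists (V * W)%type, (S1 `*` S2); split; [exact: lcS | exact: induced_setT_iso].
have sa0 : smooth (induced (TF (V * W)%type) (S1 `*` S2)) sM a0.
  pose r1 : {y : (V * W)%type | (S1 `*` S2) y} -> {v : V | S1 v} :=
    fun y => exist _ (proj1_sig y).1 (pr1 (proj2_sig y)).
  have -> : a0 = ((@proj1_sig M Ui) \o chi1) \o r1 by [].
  apply: (smooth_comp (s2 := induced (TF V) S1)).
    by apply: (smooth_restrict (L := fst)) => //; exact: smooth_fst.
  exact: (smooth_comp schi1 (smooth_val _ _)).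
have sb0 : smooth (induced (TF (V * W)%type) (S1 `*` S2)) sN b0.
  pose r2 : {y : (V * W)%type | (S1 `*` S2) y} -> {v : W | S2 v} :=
    fun y => exist _ (proj1_sig y).2 (pr2 (proj2_sig y)).
  have -> : b0 = ((@proj1_sig N Vj) \o chi2) \o r2 by [].
  apply: (smooth_comp (s2 := induced (TF W) S2)).
    by apply: (smooth_restrict (L := snd)) => //; exact: smooth_snd.
  exact: (smooth_comp schi2 (smooth_val _ _)).
have E : forall A', chi @^-1` ((@proj1_sig _ (Ui `*` Vj)) @^-1` A') =
    (fun y => (a0 y, b0 y)) @^-1` A' by [].
exists psi, chi; split.
- split.
    by move=> C [B0 oB0 ->]; exists ((Ui `*` Vj) `&` Psi @^-1` B0); [exact: oP | exact: pre].
  move=> C f [B0 oB0 ->] [_ hf]; split.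
    by exists ((Ui `*` Vj) `&` Psi @^-1` B0); [exact: oP | exact: pre].
  move=> z Cz; have [W1 [Bf [gf [[B1 oB1 eW1] W1z W1C [oBf sgf] agr]]]] := hf (psi z) Cz.
  exists (psi @^-1` W1), ((Ui `*` Vj) `&` Psi @^-1` Bf), (gf \o Psi); split.
  + by exists ((Ui `*` Vj) `&` Psi @^-1` B1); [exact: oP | rewrite eW1; exact: pre].
  + by [].
  + by move=> y /W1C.
  + split; [exact: oP | exact: popen].
  + move=> y /agr [Bfy ey]; rewrite psiE in Bfy ey.
    by split; [split; [exact: (proj2_sig y) | exact: Bfy] | exact: ey].
- split.
    move=> C [A oA ->]; rewrite E; exact: (oA _ _ a0 b0 prevS sa0 sb0).
  move=> C f [A oA ->] [_ hf]; rewrite E.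
  apply: local_sfun => //; first exact: (oA _ _ a0 b0 prevS sa0 sb0).
  move=> y Ay; have [W1 [B2 [g [[Aw oAw eW1] W1y W1C [oB2 sg] agr]]]] := hf (chi y) Ay.
  have W1E : forall z, W1 (chi z) <-> Aw (a0 z, b0 z) by move=> z; rewrite eW1.
  exists ((fun y => (a0 y, b0 y)) @^-1` Aw); split.
  + exact: (oAw _ _ a0 b0 prevS sa0 sb0).
  + by apply/W1E.
  + by move=> z /W1E /W1C.
  + apply: (sfun_ext hS (oAw _ _ a0 b0 prevS sa0 sb0) (f := g \o (fun y => (a0 y, b0 y)))).
      apply: (sfun_restr hS (proj1 sg _ _ a0 b0 prevS sa0 sb0) (oAw _ _ a0 b0 prevS sa0 sb0)).
        by move=> z /W1E /agr [].
      exact: (proj2 sg _ _ a0 b0 prevS sa0 sb0).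
    by move=> z /W1E /agr [_ ez]; rewrite /= ez.
- move=> z; apply: sig_eq; case: z => [[m n] [hm hn]] /=.
  by rewrite !sig_val_exist !phi1K phi2K.
- move=> y; apply: sig_eq; case: y => [[v w] [hv hw]] /=.
  by rewrite !sig_val_exist chi1K chi2K.
Qed.


Lemma main_gen (K : numFieldType) (TF : taylor_family K) (HTF : is_taylor_family TF)
  M N (sM : sfstr K M) (sN : sfstr K N) :
  prevariety TF sM -> prevariety TF sN ->
  exists p : sfstr K (M * N), product_structure TF sM sN p.
Proof.
move=> [hM [I [Ui [cI oUi cU chM]]]] [hN [J [Vj [cJ oVj cV chN]]]].
exists (pstr TF sM sN); split.
- split; first exact: pstr_sf.
  exists (I * J)%type, (fun k => Ui k.1 `*` Vj k.2); split.
  + by rewrite -setXTT; exact: countableX.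
  + move=> k T s a b hp ha hb; have hs : is_sfspace s by case: hp.
    exact: (openI hs (proj1 ha _ (oUi k.1)) (proj1 hb _ (oVj k.2))).
  + apply/seteqP; split => // -[m n] _.
    have : (\bigcup_i Ui i) m by rewrite cU.
    have : (\bigcup_j Vj j) n by rewrite cV.
    by case=> j _ hj [i _ hi]; exists (i, j).
  + move=> [i j] /=.
    have [V [S1 [lc1 [phi1 [chi1 [sphi1 schi1 phi1K chi1K]]]]]] := chM i.
    have [W [S2 [lc2 [phi2 [chi2 [sphi2 schi2 phi2K chi2K]]]]]] := chN j.
    exists (V * W)%type, (S1 `*` S2); split; first exact: lc_prod.
    exact: (chart_iso HTF hM hN (oUi i) (oVj j) lc1 lc2 sphi1 schi1 phi1K chi1K
                      sphi2 schi2 phi2K chi2K).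
- split; first by move=> B oB T s a b hp ha hb; exact: (proj1 ha _ oB).
  move=> B f oB sf; split; first by move=> T s a b hp ha hb; exact: (proj1 ha _ oB).
  by move=> T s a b hp ha hb; exact: (proj2 ha _ _ oB sf).
- split; first by move=> B oB T s a b hp ha hb; exact: (proj1 hb _ oB).
  move=> B f oB sf; split; first by move=> T s a b hp ha hb; exact: (proj1 hb _ oB).
  by move=> T s a b hp ha hb; exact: (proj2 hb _ _ oB sf).
- move=> T s a b hp ha hb; split.
    by move=> A oA; exact: oA.
  by move=> A f oA [_ sf]; exact: sf.
Qed.

Local Close Scope classical_set_scope.

Theorem lemma3p6p13 (R : realType) (b : bool)
  (TF : taylor_family (Kfield R b)) (HTF : is_taylor_family TF)
  (M N : Type) (sM : sfstr (Kfield R b) M) (sN : sfstr (Kfield R b) N) :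
  prevariety TF sM -> prevariety TF sN ->
  exists p : sfstr (Kfield R b) (M * N), product_structure TF sM sN p.
Proof. exact: main_gen. Qed.
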